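(* Let $(X,d)$ be a nonempty metric space, let $F:X\rightarrow K(X)$ be a set-valued uniform pointwise contraction with modulus $\beta\in[0,1)$, and let $p:[0,1]\to X$ be a continuous path with $l(p)<\infty$. Then $l(F\circ p)\le\beta\, l(p)<\infty$, where $$l(F\circ p):=\sup_{\pi\in\Pi}\sum_{i=1}^n H(F(p(t_{i-1})),F(p(t_i))).$$
   Context: $\Pi$ is the set of finite partitions $0=t_0<t_1<\cdots<t_n=1$ of $[0,1]$. The length of a path $p$ is $l(p)=\sup_{\pi\in\Pi}\sum_{i=1}^n d(p(t_{i-1}),p(t_i))$. $K(X)$ is the set of nonempty compact subsets of $X$; $H$ is the Hausdorff distance $H(A,B)=\max\{\sup_{a\in A}\inf_{b\in B}d(a,b),\sup_{b\in B}\inf_{a\in A}d(a,b)\}$. $F$ is a set-valued uniform pointwise contraction with modulus $\beta$ if every $x\in X$ has an open neighborhood $N(x)$ with $H(F(x),F(y))\le\beta\, d(x,y)$ for all $y\in N(x)$. *)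

(* Defs.v *)
From HB Require Import structures.
From mathcomp Require Import all_boot all_order all_algebra.
From mathcomp Require Import all_classical all_reals all_analysis.
Set Implicit Arguments. Unset Strict Implicit. Unset Printing Implicit Defensive.
Import Order.TTheory GRing.Theory Num.Theory.
Local Open Scope classical_set_scope.
Local Open Scope ring_scope.

Section Defs.
Variables (R : realType) (X : Type) (d : X -> X -> R).

Definition is_metric : Prop :=
  (forall x y, 0 <= d x y) /\ (forall x y, d x y = 0 <-> x = y) /\
  (forall x y, d x y = d y x) /\ (forall x y z, d x z <= d x y + d y z).

Definition mopen (U : set X) : Prop :=
  forall x, U x -> exists e : R, 0 < e /\ forall y, d x y < e -> U y.

Definition mcompact (K : set X) : Prop :=
  forall (I : Type) (U : I -> set X), (forall i, mopen (U i)) ->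
    K `<=` \bigcup_i U i ->
    exists J : set I, finite_set J /\ K `<=` \bigcup_(i in J) U i.

Definition nonempty_compact (K : set X) : Prop := K !=set0 /\ mcompact K.

Definition hausdorff (A B : set X) : \bar R :=
  Order.max
    (ereal_sup [set ereal_inf [set (d a b)%:E | b in B] | a in A])
    (ereal_sup [set ereal_inf [set (d a b)%:E | a in A] | b in B]).

Definition uniform_pointwise_contraction (F : X -> set X) (beta : R) : Prop :=
  forall x, exists N : set X, mopen N /\ N x /\
    forall y, N y -> (hausdorff (F x) (F y) <= (beta * d x y)%:E)%E.

(* continuity of a path [0,1] -> X (path given as a function on R,
   only its values on [0,1] matter) *)
Definition path_continuous (p : R -> X) : Prop :=
  forall t, 0 <= t <= 1 -> forall e : R, 0 < e ->
    exists delta : R, 0 < delta /\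
      forall s, 0 <= s <= 1 -> `|s - t| < delta -> d (p t) (p s) < e.
End Defs.

Definition is_partition (R : realType) (n : nat) (t : nat -> R) : Prop :=
  t 0%N = 0 /\ t n = 1 /\ forall i, (i < n)%N -> t i < t i.+1.

Definition var_len (R : realType) (X : Type) (D : X -> X -> \bar R)
  (p : R -> X) : \bar R :=
  ereal_sup [set v : \bar R | exists (n : nat) (t : nat -> R),
    is_partition n t /\ v = (\sum_(i < n) D (p (t i)) (p (t i.+1)))%E].

(* Main.v *)
Require Import Defs.
From HB Require Import structures.
From mathcomp Require Import all_boot all_order all_algebra.
From mathcomp Require Import all_classical all_reals all_analysis.
Import Order.TTheory GRing.Theory Num.Theory.
Local Open Scope classical_set_scope.
Local Open Scope ring_scope.
Set Implicit Arguments. Unset Strict Implicit.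



Section Haus.
Variables (R : realType) (X : Type).

Lemma inf_ge0 (D : X -> X -> R) (D0 : forall x y, 0 <= D x y) a (C : set X) :
  (0 <= ereal_inf [set (D a c)%:E | c in C])%E.
Proof. by apply/ereal_infP => _ [c _ <-]; rewrite lee_fin. Qed.

Lemma sup_inf_tri (D : X -> X -> R) (D0 : forall x y, 0 <= D x y)
  (tri : forall x y z, D x z <= D x y + D y z) (A B C : set X) :
  B !=set0 ->
  (ereal_sup [set ereal_inf [set (D a c)%:E | c in C] | a in A] <=
   ereal_sup [set ereal_inf [set (D a b)%:E | b in B] | a in A] +
   ereal_sup [set ereal_inf [set (D b c)%:E | c in C] | b in B])%E.
Proof.
move=> [b0 Bb0].
set S2 := ereal_sup [set ereal_inf [set (D b c)%:E | c in C] | b in B].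
have S2ge0 : (0 <= S2)%E.
  apply: le_trans (inf_ge0 D0 b0 C) _; apply: ereal_sup_ubound; by exists b0.
apply: ge_ereal_sup => _ [a Aa <-].
set I := ereal_inf _.
have c1 : forall b, B b -> (I <= (D a b)%:E + S2)%E.
  move=> b Bb; move: S2ge0; case E2 : S2 => [s| |] // S2ge0; last by rewrite leey.
  apply/lee_addgt0Pr => e e0.
  have : (ereal_inf [set (D b c)%:E | c in C] < (s + e)%:E)%E.
    apply: le_lt_trans (_ : (s%:E < _)%E); last by rewrite lte_fin ltrDl.
    rewrite -E2; apply: ereal_sup_ubound; by exists b.
  case/ereal_inf_lt => _ [c Cc <-]; rewrite lte_fin => Dbc.
  apply: le_trans (_ : ((D a c)%:E <= _)%E).
    by apply: ereal_inf_lbound; exists c.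
  rewrite -!EFinD lee_fin; apply: le_trans (tri a b c) _.
  by rewrite -addrA lerD2l ltW.
set g := ereal_inf [set (D a b)%:E | b in B].
have c2 : (I <= g + S2)%E.
  have g0 : (0 <= g)%E by exact: inf_ge0.
  move: S2ge0 g0 c1; case: S2 => [s| |] // S2ge0 g0 c1; last first.
    by rewrite addey ?leey //; case: g g0.
  apply/lee_addgt0Pr => e e0.
  move: g0; case Eg : g => [r| |] // g0; last by rewrite /= leey.
  have : (g < (r + e)%:E)%E by rewrite Eg lte_fin ltrDl.
  case/ereal_inf_lt => _ [b Bb <-]; rewrite lte_fin => Dab.
  apply: le_trans (c1 b Bb) _.
  by rewrite -!EFinD lee_fin addrAC lerD2r ltW.
apply: le_trans c2 _; apply: leeD2r; apply: ereal_sup_ubound; by exists a.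
Qed.

Variable d : X -> X -> R.
Hypothesis md : is_metric d.

Lemma haus_tri (A B C : set X) : B !=set0 ->
  (hausdorff d A C <= hausdorff d A B + hausdorff d B C)%E.
Proof.
move=> B0; case: md => d0 [dE [dsym dtri]].
rewrite /hausdorff ge_max; apply/andP; split.
  apply: le_trans (sup_inf_tri d0 dtri A C B0) _.
  by apply: leeD; rewrite le_max lexx.
pose d' x y := d y x.
have d'0 : forall x y, 0 <= d' x y by move=> x y; exact: d0.
have d'tri : forall x y z, d' x z <= d' x y + d' y z.
  by move=> x y z; rewrite /d' addrC; exact: dtri.
have := sup_inf_tri d'0 d'tri C A B0; rewrite /d' => H.
apply: le_trans H _; rewrite addeC.
by apply: leeD; rewrite le_max lexx orbT.
Qed.

Lemma haus_sym (A B : set X) : hausdorff d A B = hausdorff d B A.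
Proof.
case: md => d0 [dE [dsym dtri]].
rewrite /hausdorff maxC.
congr (maxe (ereal_sup _) (ereal_sup _)); apply/seteqP; split=> _ [a Aa <-];
  exists a => //; congr ereal_inf; apply/seteqP; split=> _ [b Bb <-];
  by exists b => //; rewrite dsym.
Qed.

Lemma haus_refl (A : set X) : (hausdorff d A A <= 0)%E.
Proof.
case: md => d0 [dE [dsym dtri]].
rewrite /hausdorff ge_max; apply/andP; split; apply: ge_ereal_sup => _ [a Aa <-];
  apply: ge_ereal_inf; exists (d a a)%:E; try (by exists a);
  by rewrite (proj2 (dE a a) erefl).
Qed.
End Haus.



Section Chain.
Variables (R : realType) (X : Type) (d : X -> X -> R) (F : X -> set X)
  (beta : R) (p : R -> X).
Hypothesis md : is_metric d.
Hypothesis Fne : forall x, F x !=set0.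
Hypothesis hb : 0 <= beta.
Hypothesis hc : uniform_pointwise_contraction d F beta.
Hypothesis pc : path_continuous d p.

Let h s t := hausdorff d (F (p s)) (F (p t)).

Definition chainP a t := exists m (w : nat -> R), w 0%N = a /\ w m = t /\
  (forall j, (j < m)%N -> w j < w j.+1) /\
  (h a t <= (beta * \sum_(0 <= j < m) d (p (w j)) (p (w j.+1)))%:E)%E.

Lemma chain_refl a : chainP a a.
Proof.
exists 0%N, (fun _ => a); split=> //; split=> //; split=> // .
by rewrite big_geq // mulr0; apply: haus_refl.
Qed.

Lemma chain_ext a t s : chainP a t -> t < s ->
  (h t s <= (beta * d (p t) (p s))%:E)%E -> chainP a s.
Proof.
move=> [m [w [w0 [wm [wi wh]]]]] ts hts.
exists m.+1, (fun j => if (j <= m)%N then w j else s); split => /=.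
  by [].

split; first by rewrite ltnn.
split.
  move=> j; rewrite ltnS => jm; rewrite jm.
  case: (ltngtP j m) => [jlt | jgt | ->].
  - by apply: wi.
  - by rewrite ltnNge jm in jgt.
  - by rewrite wm.
rewrite big_nat_recr //= leqnn ltnn wm.
rewrite (@eq_big_nat _ _ _ 0 m _ (fun j => d (p (w j)) (p (w j.+1)))); last first.
  by move=> i /andP[_ im]; rewrite ltnW // im.
apply: le_trans (haus_tri md (F (p a)) (F (p s)) (Fne (p t))) _.
by rewrite mulrDr EFinD; apply: leeD.
Qed.

Lemma chain_all a b : 0 <= a -> a <= b -> b <= 1 -> chainP a b.
Proof.
move=> a0 ab b1.
case: md => d0 [dE [dsym dtri]].
pose S := [set t | a <= t <= b /\ chainP a t].
have Sa : S a by split; [rewrite lexx ab | exact: chain_refl].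
have hS : has_sup S.
  split; first by exists a.
  by exists b => t [/andP[_ ->]].
pose T := sup S.
have aT : a <= T by apply: sup_upper_bound.
have Tb : T <= b by apply: ge_sup; [exists a | move=> t [/andP[_ ->]]].
have T01 : 0 <= T <= 1 by rewrite (le_trans a0 aT) (le_trans Tb b1).
case: (hc (p T)) => N [oN [NT HN]].
case: (oN _ NT) => e [e0 He].
case: (pc T01 e0) => del [del0 Hdel].
have good : forall s, 0 <= s <= 1 -> `|s - T| < del ->
    (h T s <= (beta * d (p T) (p s))%:E)%E.
  by move=> s s01 sT; apply: HN; apply: He; apply: Hdel.
have ST : S T.
  case: (sup_adherent del0 hS) => t [/andP[ta tb] ct] Tt.
  have tT : t <= T by apply: (sup_upper_bound hS); split => //; rewrite ta tb.
  split; first by rewrite aT Tb.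
  case: (eqVneq t T) => [<- //|ntT].
  have ltT : t < T by rewrite lt_neqAle ntT tT.
  apply: chain_ext ct ltT _.
  rewrite /h (haus_sym md) dsym; apply: good.
    by rewrite (le_trans a0 ta) (le_trans tb b1).
  by rewrite distrC ger0_norm ?subr_ge0 // ltrBlDr addrC -ltrBlDr.
case: (ltP T b) => [Tltb|bT]; last first.
  have bT' : b = T by apply/eqP; rewrite eq_le bT Tb.
  by rewrite bT'; case: ST.
exfalso.
pose T' := Num.min b (T + del / 2).
have TT' : T < T'.
  by rewrite lt_min Tltb ltrDl divr_gt0.
have TT'' := TT'.
have ST' : S T'.
  split.
    apply/andP; split; first exact: le_trans aT (ltW TT').
    by rewrite ge_min lexx.
  apply: (chain_ext (proj2 ST) (TT'')); apply: good.
    apply/andP; split; first by case/andP: T01 => T0 _; exact: le_trans T0 (ltW TT').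
    by rewrite ge_min b1.
  rewrite ger0_norm ?subr_ge0 ?(ltW TT') // ltrBlDl.
  apply: (@le_lt_trans _ _ (T + del / 2)); first by rewrite ge_min lexx orbT.
  by rewrite ltrD2l ltr_pdivrMr // ltr_pMr // ltr1n.
have := sup_upper_bound hS ST'; rewrite -/T => /(lt_le_trans TT'); by rewrite ltxx.
Qed.
End Chain.
Unset Implicit Arguments. Set Strict Implicit.


Lemma sum_cat_nat (R : realType) (f : nat -> R) m m' :
  \sum_(0 <= j < m + m') f j = \sum_(0 <= j < m) f j + \sum_(0 <= j < m') f (m + j)%N.
Proof.
elim: m' => [|m' IH]; first by rewrite addn0 [X in _ + X]big_geq // addr0.
by rewrite addnS !big_nat_recr //= IH addrA.
Qed.

Theorem lemma13 (R : realType) (X : Type) (d : X -> X -> R)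
  (F : X -> set X) (beta : R) (p : R -> X) :
  is_metric d -> inhabited X ->
  (forall x, nonempty_compact d (F x)) ->
  0 <= beta < 1 ->
  uniform_pointwise_contraction d F beta ->
  path_continuous d p ->
  (var_len (fun x y => (d x y)%:E) p < +oo)%E ->
  (var_len (fun x y => hausdorff d (F x) (F y)) p
     <= beta%:E * var_len (fun x y => (d x y)%:E) p)%E /\
  (beta%:E * var_len (fun x y => (d x y)%:E) p < +oo)%E.
Proof.
move=> md inh Fc hb' hc pc Lfin.
have Fne : forall x, F x !=set0 by move=> x; exact: (Fc x).1.
case/andP: (hb') => hb _.
set L := var_len (fun x y => (d x y)%:E) p.
have Lge : forall m u, is_partition m u ->
    ((\sum_(0 <= j < m) d (p (u j)) (p (u j.+1)))%:E <= L)%E.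
  move=> m u pu; apply: ereal_sup_ubound; exists m, u; split => //.
  by rewrite -sumEFin big_mkord.
split; last by apply: lte_mul_pinfty => //; rewrite lee_fin.
apply: ge_ereal_sup => _ [n [t [pt ->]]].
case: pt => t0 [tn ti].
have tmono : forall i k, (i + k <= n)%N -> t i <= t (i + k)%N.
  move=> i; elim=> [|k IH] ik; first by rewrite addn0.
  have ik' : (i + k <= n)%N by rewrite (leq_trans _ ik) // leq_add2l.
  apply: (le_trans (IH ik')); rewrite addnS; apply/ltW/ti.
  by rewrite -addnS.
have t01 : forall i, (i <= n)%N -> 0 <= t i <= 1.
  move=> i inn; apply/andP; split.
    by rewrite -t0; have := tmono 0%N i; rewrite add0n; apply.
  by rewrite -tn -(subnKC inn); apply: tmono; rewrite subnKC.
have main : forall k, (k <= n)%N -> exists m (u : nat -> R), u 0%N = 0 /\ u m = t k /\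
    (forall j, (j < m)%N -> u j < u j.+1) /\
    (\sum_(0 <= i < k) hausdorff d (F (p (t i))) (F (p (t i.+1))) <=
      (beta * \sum_(0 <= j < m) d (p (u j)) (p (u j.+1)))%:E)%E.
  elim=> [_|k IH kn].
    exists 0%N, (fun _ => 0); split => //; split; first by rewrite t0.
    by split => //; rewrite !big_geq // mulr0.
  case: (IH (ltnW kn)) => m [u [u0 [um [ui us]]]].
  have tk := t01 k (ltnW kn); have tk1 := t01 k.+1 kn.
  case/andP: tk => tk0 _; case/andP: tk1 => _ tk11.
  case: (chain_all md Fne hc pc tk0 (ltW (ti k kn)) tk11)
    => m' [w [w0 [wm [wi ws]]]].
  exists (m + m')%N, (fun j => if (j < m)%N then u j else w (j - m)%N).
  split.
    case: (posnP m) => [m0|mpos]; last by rewrite u0.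
    by rewrite m0 subn0 w0 -um m0 u0.
  split; first by rewrite ltnNge leq_addr /= addKn wm.
  split.
    move=> j jmm; case: (ltnP j.+1 m) => [j1m | mj1].
      by rewrite (ltnW j1m); apply: ui; apply: ltnW.
    case: (ltnP j m) => [jm | mj].
      have e : j.+1 = m by apply/eqP; rewrite eqn_leq jm mj1.
      rewrite -e subnn w0 -um -e; apply: ui.
      by rewrite -e.
    rewrite subSn //; apply: wi.
    by rewrite ltn_subLR.
  rewrite big_nat_recr //= sum_cat_nat mulrDr EFinD.
  apply: leeD.
    apply: le_trans us _; rewrite lee_fin; apply: ler_wpM2l => //.
    rewrite le_eqVlt; apply/orP; left; apply/eqP; apply: eq_big_nat => j /andP[_ jm].
    rewrite jm; case: ifP => // j1m.
    have e : j.+1 = m by apply/eqP; rewrite eqn_leq jm leqNgt j1m.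
    by rewrite -e subnn w0 -um -e.
  apply: le_trans ws _; rewrite lee_fin; apply: ler_wpM2l => //.
  rewrite le_eqVlt; apply/orP; left; apply/eqP; apply: eq_big_nat => j _.
  by rewrite ltnNge leq_addr /= -addnS ltnNge leq_addr /= !addKn.
case: (main n (leqnn n)) => m [u [u0 [um [ui us]]]].
rewrite -(big_mkord xpredT (fun i => hausdorff d (F (p (t i))) (F (p (t i.+1))))); apply: le_trans us _.
rewrite EFinM; apply: lee_wpmul2l; first by rewrite lee_fin.
by apply: Lge; split => //; rewrite um.
Qed.
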